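(* Let $\mathbf d=(d_1,\ldots,d_n)$ be a degree sequence, $w\in[n]$, $\hat n$ and $V_w$ as in the context, and assume $\hat n<n$. Let $\mathfrak s_{n,w}(w)$ be the six-length of $w$ in a random functional graph on $V_w$ with in-degrees $(d_v)_{v\in V_w}$ (the graph of a uniformly random $f:V_w\to V_w$ with $|f^{-1}(\{v\})|=d_v$ for all $v\in V_w$), and let $\mathfrak s_n(w)$ be the six-length of $w$ in a random functional graph with degree sequence $\mathbf d$. Then \[\mathfrak s_n(w)\overset{d}{=}\mathcal R\big(n-\hat n,\ \mathfrak s_{n,w}(w),\ \hat n+1-\mathfrak s_{n,w}(w)\big),\] where the Pólya urn quantities $\{\mathcal R(m,a,b)\}$ are independent of $\mathfrak s_{n,w}(w)$; that is, for every $r$, $\mathbb P(\mathfrak s_n(w)=r)=\sum_{s}\mathbb P(\mathfrak s_{n,w}(w)=s)\,\mathbb P(\mathcal R(n-\hat n,s,\hat n+1-s)=r)$.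
   Context: A degree sequence is $\mathbf d=(d_1,\ldots,d_n)\in\mathbb N_0^n$ with $\sum_j d_j=n$; a random functional graph with degree sequence $\mathbf d$ is the graph (edges $(v,f(v))$) of a uniform $F\in\{f:[n]\to[n]: |f^{-1}(\{i\})|=d_i\ \forall i\}$. Six-length: $\mathfrak s_f(v)=\min\{k\in\mathbb N: f^{(k)}(v)\in\{f^{(j)}(v):0\le j\le k-1\}\}$. Let $\sigma^2=\frac1n\sum_j d_j^2-1$ and $\hat n=\lfloor (n\sigma^2)^{4/3}\rfloor$; when $\hat n<n$, $V_w=[n]\setminus\{v_1,\ldots,v_{n-\hat n}\}$ where $v_1,\ldots,v_{n-\hat n}$ are distinct vertices in $[n]\setminus\{w\}$ with $d_{v_i}=1$ chosen by a fixed deterministic rule. Pólya urn: an $(a,b)$-Pólya urn starts with $a$ red and $b$ blue balls; at each step a ball is drawn uniformly at random and returned together with one additional ball of the same colour; $\mathcal R(m,a,b)$ is the number of red balls after $m$ balls have been added. *)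

(* Defs.v *)
From HB Require Import structures.
From mathcomp Require Import all_boot all_order all_algebra.
Set Implicit Arguments. Unset Strict Implicit. Unset Printing Implicit Defensive.
Import Order.TTheory GRing.Theory Num.Theory.

Definition degfuns (T : finType) (d : T -> nat) : {set {ffun T -> T}} :=
  [set f : {ffun T -> T} | [forall i : T, #|[set v | f v == i]| == d i]].

(* Six-length s_f(v) = min { k >= 1 : f^k(v) \in {f^j(v) : 0 <= j <= k-1} }.
   By pigeonhole such k exists and k <= #|T|, so the search over
   k = 1, ..., #|T| (find returns the 0-based index, hence the .+1) is exact. *)
Definition sixlen (T : finType) (f : T -> T) (v : T) : nat :=
  (find (fun k => has (fun j => iter k f v == iter j f v) (iota 0 k))
        (iota 1 #|T|)).+1.

Definition prob_sixlen (T : finType) (d : T -> nat) (v : T) (r : nat) : rat :=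
  (#|[set f in degfuns d | sixlen f v == r]|%:R / #|degfuns d|%:R)%R.

(* P(R(m,a,b) = r) for the (a,b)-Polya urn (first-step decomposition). *)
Fixpoint polya (m a b r : nat) : rat :=
  match m with
  | 0 => (r == a)%:R
  | m'.+1 => (a%:R / (a + b)%:R * polya m' a.+1 b r
              + b%:R / (a + b)%:R * polya m' a b.+1 r)%R
  end.

(* n * sigma^2 = sum_j d_j^2 - n (a natural number since sum d_j = n). *)
Definition nsigma2 (n : nat) (d : 'I_n -> nat) : nat :=
  (\sum_(j < n) (d j) ^ 2) - n.

(* floor(N^(4/3)) = the largest k with k^3 <= N^4. *)
Definition floor43 (N : nat) : nat :=
  \max_(k < (N ^ 4).+1 | k ^ 3 <= N ^ 4) k.

Definition hatn (n : nat) (d : 'I_n -> nat) : nat := floor43 (nsigma2 d).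

(* Main.v *)
Require Import Defs.
From HB Require Import structures.
From mathcomp Require Import all_boot all_order all_algebra.
From mathcomp Require Import ring.
Import Order.TTheory GRing.Theory Num.Theory.

Section SecA.
Set Implicit Arguments. Unset Strict Implicit. Unset Printing Implicit Defensive.

Lemma loopingE (T : finType) (f : T -> T) v k :
  has (fun j => iter k f v == iter j f v) (iota 0 k) = looping f v k.
Proof.
apply/hasP/trajectP => [[j]|[j Hj ->]].
  rewrite mem_iota add0n => /andP[_ Hj] /eqP E; by exists j.
by exists j; rewrite ?mem_iota ?add0n.
Qed.

Lemma sixlen_order (T : finType) (f : T -> T) v : sixlen f v = order f v.
Proof.
rewrite /sixlen; have ok : order f v <= #|T| by apply: max_card.
have o0 := order_gt0 f v.
rewrite -(prednK o0); congr S.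
case: findP => [|i Hi Ha Hb].
  move/negP; case; apply/hasP; exists (order f v); first by rewrite mem_iota o0 add1n ltnS.
  by rewrite loopingE looping_order.
have nthE j : j < #|T| -> nth 0 (iota 1 #|T|) j = j.+1.
  by move=> Hj; rewrite nth_iota // add1n.
rewrite size_iota in Hi.
have := Ha 0; rewrite nthE // loopingE => L.
apply/eqP; rewrite eqn_leq; apply/andP; split.
  rewrite leqNgt; apply/negP => Hlt.
  have := Hb 0 _ Hlt; rewrite nthE; last by rewrite (leq_trans _ ok) // prednK.
  by rewrite loopingE prednK // looping_order.
rewrite -ltnS prednK //; rewrite leqNgt; apply/negP => Hle.
move: L; apply/negP; rewrite -looping_uniq.
by rewrite -(take_traject _ _ Hle) take_uniq // orbit_uniq.
Qed.

End SecA.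
Section SecB.
Set Implicit Arguments. Unset Strict Implicit. Unset Printing Implicit Defensive.

Definition Phi (T T' : finType) (emb : T' -> T) (inv : T -> T') (u : T)
  (p : {ffun T' -> T'} * T) : {ffun T -> T} :=
  [ffun x => if x == u then (if p.2 == u then u else emb (p.1 (inv p.2)))
             else if x == p.2 then u else emb (p.1 (inv x))].

Definition Psi (T T' : finType) (emb : T' -> T) (inv : T -> T') (u : T)
  (f : {ffun T -> T}) : {ffun T' -> T'} * T :=
  ([ffun y => inv (if f (emb y) == u then f u else f (emb y))],
   if f u == u then u else odflt u [pick x | f x == u]).

Lemma PsiK (T T' : finType) (emb : T' -> T) (inv : T -> T') (u : T)
  (embK : cancel emb inv) (invK : forall x, x != u -> emb (inv x) = x)
  (embu : forall y, emb y != u) :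
  cancel (Phi emb inv u) (Psi emb inv u).
Proof.
move=> [f' c]; rewrite /Psi /Phi /=.
have cu : c != u -> (emb (f' (inv c)) == u) = false by move=> _; apply/negbTE.
congr pair.
  apply/ffunP => y; rewrite !ffunE eqxx (negbTE (embu y)).
  have [Ec|Nc] := eqVneq (emb y) c.
    by rewrite eqxx -Ec (negbTE (embu y)) !embK.
  by rewrite (negbTE (embu _)) !embK.
rewrite !ffunE eqxx; have [->|Nc] := eqVneq c u; first by rewrite eqxx.
rewrite (negbTE (embu _)).
case: pickP => [x|] /=.
  rewrite ffunE; have [->|Nx] := eqVneq x u; first by rewrite (negbTE (embu _)).
  by have [//|Nxc] := eqVneq x c; rewrite (negbTE (embu _)).
by move/(_ c); rewrite ffunE (negbTE Nc) eqxx eqxx.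
Qed.

End SecB.
Section SecC.
Set Implicit Arguments. Unset Strict Implicit. Unset Printing Implicit Defensive.

Lemma card_set_sum (T : finType) (P : pred T) : #|[set x | P x]| = \sum_x (P x : nat).
Proof.
rewrite -sum1_card big_mkcond /=; apply: eq_bigr => x _.
by rewrite inE; case: (P x).
Qed.

Lemma sumT (T T' : finType) (emb : T' -> T) (inv : T -> T') (u : T)
  (embK : cancel emb inv) (invK : forall x, x != u -> emb (inv x) = x)
  (embu : forall y, emb y != u) (g : T -> nat) :
  \sum_x g x = g u + \sum_y g (emb y).
Proof.
rewrite (bigD1 u) //=; congr addn.
rewrite (reindex_onto emb inv); last by move=> x /invK.
by apply: eq_bigl => y; rewrite embu embK eqxx.
Qed.

Lemma Psi_c (T T' : finType) (emb : T' -> T) (inv : T -> T') (u : T)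
  (f : {ffun T -> T}) p (Hp : forall x, (f x == u) = (x == p)) :
  (Psi emb inv u f).2 = p.
Proof.
rewrite /Psi /=; have [fu|fu] := eqVneq (f u) u.
  by move/eqP: fu; rewrite Hp => /eqP.
case: pickP => [x|/(_ p)] /=; first by rewrite Hp => /eqP.
by rewrite Hp eqxx.
Qed.

Lemma PhiK (T T' : finType) (emb : T' -> T) (inv : T -> T') (u : T)
  (embK : cancel emb inv) (invK : forall x, x != u -> emb (inv x) = x)
  (embu : forall y, emb y != u)
  (f : {ffun T -> T}) p (Hp : forall x, (f x == u) = (x == p)) :
  Phi emb inv u (Psi emb inv u f) = f.
Proof.
have Ec := @Psi_c _ _ emb inv u f p Hp.
apply/ffunP => x; rewrite /Phi ffunE Ec.
have [->|Nx] := eqVneq x u.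
  have [pu|pu] := eqVneq p u.
    by apply/esym/eqP; rewrite Hp pu.
  rewrite /Psi /= ffunE (invK p pu) Hp eqxx invK //.
  by rewrite Hp eq_sym.
have [->|Nxp] := eqVneq x p; first by apply/esym/eqP; rewrite Hp.
rewrite /Psi /= ffunE (invK x Nx) Hp (negbTE Nxp) invK // Hp //.
Qed.

Lemma degfunsP (T : finType) (d : T -> nat) (f : {ffun T -> T}) :
  (f \in degfuns d) <-> (forall i, \sum_x (f x == i : nat) = d i).
Proof.
rewrite /degfuns inE; split.
  by move=> /forallP H i; rewrite -(eqP (H i)) card_set_sum.
by move=> H; apply/forallP => i; rewrite card_set_sum H.
Qed.

Lemma Psi_deg (T T' : finType) (emb : T' -> T) (inv : T -> T') (u : T)
  (embK : cancel emb inv) (invK : forall x, x != u -> emb (inv x) = x)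
  (embu : forall y, emb y != u) (d : T -> nat) (d' : T' -> nat)
  (hd : forall j, d' j = d (emb j))
  (f : {ffun T -> T}) p (Hp : forall x, (f x == u) = (x == p)) :
  f \in degfuns d -> (Psi emb inv u f).1 \in degfuns d'.
Proof.
move/degfunsP => Hf; apply/degfunsP => j; rewrite hd -Hf.
rewrite (sumT embK invK embu).
have key a : a != u -> (inv a == j) = (a == emb j).
  move=> au; apply/eqP/eqP => [<-|->]; by rewrite ?invK ?embK.
have [pu|pu] := eqVneq p u.
  have fu : f u = u by apply/eqP; rewrite Hp pu.
  rewrite fu eq_sym (negbTE (embu j)) add0n.
  apply: eq_bigr => y _; rewrite /Psi /= ffunE Hp pu (negbTE (embu y)) key //.
  by rewrite Hp pu (negbTE (embu y)).
have fu : f u != u by rewrite Hp eq_sym.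
rewrite (bigD1 (inv p)) //= [X in _ = _ + X](bigD1 (inv p)) //=.
rewrite /Psi /= !ffunE (invK p pu) Hp eqxx key //.
have -> : (f p == emb j) = false.
  have fp : f p = u by apply/eqP; rewrite Hp.
  by rewrite fp eq_sym (negbTE (embu j)).
rewrite add0n; congr addn; apply: eq_bigr => y Hy.
have Ny : emb y != p by apply: contra Hy => /eqP <-; rewrite embK.
rewrite ffunE Hp (negbTE Ny) key //.
by rewrite Hp.
Qed.

Lemma Phi_deg (T T' : finType) (emb : T' -> T) (inv : T -> T') (u : T)
  (embK : cancel emb inv) (invK : forall x, x != u -> emb (inv x) = x)
  (embu : forall y, emb y != u) (d : T -> nat) (d' : T' -> nat)
  (hd : forall j, d' j = d (emb j)) (du : d u = 1)
  (f' : {ffun T' -> T'}) c :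
  f' \in degfuns d' -> Phi emb inv u (f', c) \in degfuns d.
Proof.
have embI : injective emb := can_inj embK.
move/degfunsP => Hf; apply/degfunsP => i; rewrite (sumT embK invK embu).
rewrite /Phi /= ffunE eqxx.
under eq_bigr do rewrite ffunE (negbTE (embu _)).
have [->|iu] := eqVneq i u.
  rewrite du; have [cu|cu] := eqVneq c u.
    rewrite eqxx big1 // => y _; rewrite cu (negbTE (embu y)).
    by rewrite (negbTE (embu _)).
  rewrite (negbTE (embu _)) add0n (bigD1 (inv c)) //= invK // !eqxx.
  rewrite big1 // => y Hy; have -> : (emb y == c) = false.
    by apply/negbTE; apply: contra Hy => /eqP <-; rewrite embK.
  by rewrite (negbTE (embu _)).
rewrite -(invK i iu) -hd -Hf.
have [cu|cu] := eqVneq c u.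
  rewrite eq_sym (negbTE (embu _)) add0n; apply: eq_bigr => y _.
  by rewrite cu (negbTE (embu y)) embK (inj_eq embI).
rewrite (inj_eq embI) (bigD1 (inv c)) //= [X in _ = X](bigD1 (inv c)) //=.
rewrite (invK c cu) eqxx [u == _]eq_sym (negbTE (embu _)) add0n; congr addn.
apply: eq_bigr => y Hy; have -> : (emb y == c) = false.
  by apply/negbTE; apply: contra Hy => /eqP <-; rewrite embK.
by rewrite embK (inj_eq embI).
Qed.

End SecC.
Section SecD.
Set Implicit Arguments. Unset Strict Implicit. Unset Printing Implicit Defensive.

Lemma Phi_reach (T T' : finType) (emb : T' -> T) (inv : T -> T') (u : T)
  (embK : cancel emb inv) (invK : forall x, x != u -> emb (inv x) = x)
  (embu : forall y, emb y != u) (f' : {ffun T' -> T'}) c w' :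
  let f := Phi emb inv u (f', c) in
  let R := emb @: [set y | fconnect f' w' y] in
  fconnect f (emb w') =i R :|: (if c \in R then [set u] else set0).
Proof.
move=> f R.
have fE1 y : emb y != c -> f (emb y) = emb (f' y).
  by move=> H; rewrite /f /Phi ffunE (negbTE (embu y)) (negbTE H) embK.
have fE2 : c != u -> f c = u by move=> H; rewrite /f /Phi ffunE (negbTE H) eqxx.
have fE3 : c != u -> f u = emb (f' (inv c)).
  by move=> H; rewrite /f /Phi ffunE eqxx (negbTE H).
have reach m : fconnect f (emb w') (emb (iter m f' w')).
  elim: m => [|m IH] /=; first exact: connect0.
  set z := iter m f' w' in IH *.
  have [Ec|Nc] := eqVneq (emb z) c.
    have cu : c != u by rewrite -Ec embu.
    apply: (connect_trans IH); apply: (connect_trans (fconnect1 f _)).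
    rewrite Ec fE2 //; have -> : emb (f' z) = f u by rewrite fE3 // -Ec embK.
    exact: fconnect1.
  by rewrite -fE1 //; apply: (connect_trans IH); apply: fconnect1.
have reachR y : fconnect f' w' y -> fconnect f (emb w') (emb y).
  by move=> H; rewrite -(iter_findex H); apply: reach.
move=> x; apply/idP/idP.
  move=> H; rewrite -(iter_findex H); elim: (findex _ _ _) => [|n IH] /=.
    by rewrite inE; apply/orP; left; apply/imsetP; exists w' => //; rewrite inE connect0.
  set z := iter n f (emb w') in IH *.
  move: IH; rewrite !inE => /orP[/imsetP[y Hy ->]|].
    have [Ec|Nc] := eqVneq (emb y) c.
      have cu : c != u by rewrite -Ec embu.
      rewrite Ec fE2 //; have -> : c \in R by rewrite -Ec; apply/imsetP; exists y.
      by rewrite inE eqxx orbT.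
    rewrite fE1 //; apply/orP; left; apply/imsetP; exists (f' y) => //.
    by rewrite inE; rewrite inE in Hy; apply: (connect_trans Hy); apply: fconnect1.
  case: ifP => cR; last by rewrite inE.
  rewrite inE => /eqP ->; case/imsetP: cR => y Hy Ec.
  have cu : c != u by rewrite Ec embu.
  rewrite fE3 // Ec embK; apply/orP; left; apply/imsetP; exists (f' y) => //.
  by rewrite inE; rewrite inE in Hy; apply: (connect_trans Hy); apply: fconnect1.
rewrite inE => /orP[/imsetP[y Hy ->]|]; first by rewrite inE in Hy; apply: reachR.
case: ifP => cR; last by rewrite inE.
rewrite inE => /eqP ->; case/imsetP: cR => y Hy Ec.
have cu : c != u by rewrite Ec embu.
rewrite -(fE2 cu); apply: (connect_trans _ (fconnect1 f _)).
by rewrite Ec; apply: reachR; rewrite inE in Hy.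
Qed.

Lemma Phi_sixlen (T T' : finType) (emb : T' -> T) (inv : T -> T') (u : T)
  (embK : cancel emb inv) (invK : forall x, x != u -> emb (inv x) = x)
  (embu : forall y, emb y != u) (f' : {ffun T' -> T'}) c w' :
  sixlen (Phi emb inv u (f', c)) (emb w') =
  sixlen f' w' + (c \in emb @: [set y | fconnect f' w' y]).
Proof.
rewrite !sixlen_order /order (eq_card (Phi_reach embK invK embu f' c w')).
have embI : injective emb := can_inj embK.
have cR : #|emb @: [set y | fconnect f' w' y]| = #|fconnect f' w'|.
  by rewrite card_imset //; apply: eq_card => y; rewrite inE.
case: ifP => H.
  rewrite setUC cardsU1 cR addnC; congr addn.
  by case: imsetP => // -[y _ E]; move: (embu y); rewrite -E eqxx.
by rewrite setU0 cR addn0.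
Qed.

End SecD.
Section SecE.
Set Implicit Arguments. Unset Strict Implicit. Unset Printing Implicit Defensive.

Lemma deg1_pre (T : finType) (d : T -> nat) u (f : {ffun T -> T}) :
  d u = 1 -> f \in degfuns d -> exists p, forall x, (f x == u) = (x == p).
Proof.
move=> du; rewrite /degfuns inE => /forallP /(_ u); rewrite du => /cards1P [p Ep].
by exists p => x; move/setP: Ep => /(_ x); rewrite !inE.
Qed.

Lemma count_Phi (T T' : finType) (emb : T' -> T) (inv : T -> T') (u : T)
  (embK : cancel emb inv) (invK : forall x, x != u -> emb (inv x) = x)
  (embu : forall y, emb y != u) (d : T -> nat) (d' : T' -> nat)
  (hd : forall j, d' j = d (emb j)) (du : d u = 1) (P : pred {ffun T -> T}) :
  #|[set f in degfuns d | P f]| =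
  \sum_(f' in degfuns d') #|[set c : T | P (Phi emb inv u (f', c))]|.
Proof.
pose Q := [set p | (p.1 \in degfuns d') && P (Phi emb inv u p)].
have -> : [set f in degfuns d | P f] = Phi emb inv u @: Q.
  apply/setP => f; rewrite inE; apply/andP/imsetP.
    move=> [fD Pf]; have [p Hp] := deg1_pre du fD.
    exists (Psi emb inv u f); last by rewrite (PhiK embK invK embu Hp).
    rewrite inE (Psi_deg embK invK embu hd Hp fD) /=.
    by rewrite (PhiK embK invK embu Hp).
  move=> [[f' c]]; rewrite inE /= => /andP[fD Pf] ->; split => //.
  exact: (Phi_deg embK invK embu hd du).
rewrite card_imset; last exact: can_inj (PsiK embK invK embu).
rewrite /Q card_set_sum -(pair_big xpredT xpredT (fun i j => (((i, j).1 \in degfuns d') && P (Phi emb inv u (i, j)) : nat))) /=.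
rewrite [RHS]big_mkcond /=; apply: eq_bigr => f' _.
rewrite card_set_sum; case: (f' \in degfuns d') => /=.
  by [].
by rewrite big1.
Qed.

End SecE.
Section SecF.
Set Implicit Arguments. Unset Strict Implicit. Unset Printing Implicit Defensive.

Lemma sixlen_gt0 (T : finType) (f : T -> T) v : (0 < sixlen f v)%N.
Proof. by []. Qed.

Lemma sixlen_le (T : finType) (f : T -> T) v : (sixlen f v <= #|T|)%N.
Proof. by rewrite sixlen_order; apply: max_card. Qed.

Lemma inner_count (T T' : finType) (emb : T' -> T) (inv : T -> T') (u : T)
  (embK : cancel emb inv) (invK : forall x, x != u -> emb (inv x) = x)
  (embu : forall y, emb y != u) (f' : {ffun T' -> T'}) w' r :
  #|[set c : T | sixlen (Phi emb inv u (f', c)) (emb w') == r]| =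
  ((sixlen f' w' == r.-1) * sixlen f' w' + (sixlen f' w' == r) * (#|T| - sixlen f' w'))%N.
Proof.
set s := sixlen f' w'.
set R := emb @: [set y | fconnect f' w' y].
have embI : injective emb := can_inj embK.
have cR : #|R| = s.
  by rewrite card_imset // /s sixlen_order; apply: eq_card => y; rewrite inE.
have s0 : (0 < s)%N by [].
under eq_finset do rewrite (Phi_sixlen embK invK embu).
rewrite -/s -/R.
have [E|N] := eqVneq s.+1 r.
  rewrite -E /= eqxx (ltn_eqF (ltnSn s)).
  rewrite /nat_of_bool mul1n mul0n addn0 -cR; apply: eq_card => c; rewrite inE.
  by case: (c \in R); rewrite ?addn1 ?addn0 ?eqxx // (ltn_eqF (ltnSn _)).
have [E'|N'] := eqVneq s r.
  subst r; rewrite (@gtn_eqF s.-1 s); last by rewrite ltn_predL.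
  rewrite /nat_of_bool mul0n add0n mul1n -cR -(cardsC R) addKn; apply: eq_card => c; rewrite !inE.
  case: (c \in R); rewrite ?addn0 ?eqxx //=.
  by rewrite addn1 (gtn_eqF (ltnSn _)).
have -> : (s == r.-1) = false.
  case: r N N' => [|r] N N' /=; first by rewrite eqn0Ngt s0.
  by apply/negbTE; apply: contra N => /eqP ->.
rewrite /nat_of_bool mul0n add0n; apply/eqP; rewrite cards_eq0; apply/eqP/setP => c.
rewrite !inE; case: (c \in R); rewrite ?addn1 ?addn0; apply/negbTE => //.
Qed.

Lemma card_setin_sum (T : finType) (A : {pred T}) (P : pred T) :
  #|[set x in A | P x]| = \sum_(x in A) (P x : nat).
Proof.
rewrite -sum1_card [RHS]big_mkcond [LHS]big_mkcond /=; apply: eq_bigr => x _.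
by rewrite inE; case: (x \in A); case: (P x).
Qed.

Lemma sum_ind (T : finType) (A : {pred T}) (s : T -> nat) k (g : nat -> nat) :
  (\sum_(x in A) ((s x == k) * g (s x)))%N = (#|[set x in A | s x == k]| * g k)%N.
Proof.
rewrite card_setin_sum big_distrl /=; apply: eq_bigr => x _.
by case: eqP => [->|]; rewrite ?mul1n ?mul0n.
Qed.

Lemma sum_ind_id (T : finType) (A : {pred T}) (s : T -> nat) k :
  (\sum_(x in A) ((s x == k) * s x))%N = (#|[set x in A | s x == k]| * k)%N.
Proof. exact: (sum_ind A s k id). Qed.

Local Open Scope ring_scope.

Lemma step_prob (T T' : finType) (emb : T' -> T) (inv : T -> T') (u : T)
  (embK : cancel emb inv) (invK : forall x, x != u -> emb (inv x) = x)
  (embu : forall y, emb y != u) (d : T -> nat) (d' : T' -> nat)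
  (hd : forall j, d' j = d (emb j)) (du : d u = 1%N) w' r :
  prob_sixlen d (emb w') r =
  (prob_sixlen d' w' r.-1 * (r.-1)%:R + prob_sixlen d' w' r * (#|T|%:R - r%:R))
   / #|T|%:R.
Proof.
have hD : #|degfuns d| = (#|degfuns d'| * #|T|)%N.
  rewrite (_ : #|degfuns d| = #|[set f in degfuns d | predT f]|); last first.
    by apply: eq_card => f; rewrite inE andbT.
  rewrite (count_Phi embK invK embu hd du) -sum_nat_const; apply: eq_bigr => f' _.
  by apply: eq_card => c; rewrite inE.
rewrite /prob_sixlen hD (count_Phi embK invK embu hd du).
under eq_bigr do rewrite (inner_count embK invK embu).
rewrite big_split /= sum_ind sum_ind_id.
set C1 := #|[set x in _ | _ == r.-1]|.
set C2 := #|[set x in _ | _ == r]|.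
rewrite natrD.
have -> : (C2 * (#|T| - r))%:R = C2%:R * (#|T|%:R - r%:R) :> rat.
  have [->|C20] := eqVneq C2 0%N; first by rewrite !mul0n !mul0r.
  have : (r <= #|T|)%N.
    have C2p : (0 < C2)%N by rewrite lt0n.
    case/card_gt0P: C2p => f'; rewrite inE => /andP[_ /eqP <-].
    exact: leq_trans (sixlen_le f' w') (leq_card _ (can_inj embK)).
  by move=> H; rewrite natrM natrB.
rewrite !natrM invfM; ring.
Qed.

End SecF.
Section SecG.
Set Implicit Arguments. Unset Strict Implicit. Unset Printing Implicit Defensive.
Local Open Scope ring_scope.

Lemma polya_last k a b r :
  polya k.+1 a b r =
  (polya k a b r.-1 * (r.-1)%:R + polya k a b r * ((a + b + k)%N%:R - r%:R))
   / (a + b + k)%N%:R.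
Proof.
elim: k a b => [|k IH] a b.
  rewrite /= !addn0; case: r => [|r] /=.
    by case: a => [|a] /=; ring.
  rewrite eqSS; have [->|ra] := eqVneq r a.
    have -> : (a.+1 == a) = false by elim: a.
    by rewrite /=; ring.
  have [E|N] := eqVneq r.+1 a; last by rewrite /=; ring.
  rewrite -E natrD; simpl; ring.
have h2 : polya k.+2 a b r = a%:R / (a + b)%N%:R * polya k.+1 a.+1 b r
   + b%:R / (a + b)%N%:R * polya k.+1 a b.+1 r by [].
have h1 x : polya k.+1 a b x = a%:R / (a + b)%N%:R * polya k a.+1 b x
   + b%:R / (a + b)%N%:R * polya k a b.+1 x by [].
rewrite h2 (IH a.+1 b) (IH a b.+1) !h1.
have -> : (a.+1 + b + k)%N = (a + b + k.+1)%N by rewrite addSn addnS.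
have -> : (a + b.+1 + k)%N = (a + b + k.+1)%N by rewrite addnS addnS.
ring.
Qed.

End SecG.
Section SecH.
Set Implicit Arguments. Unset Strict Implicit. Unset Printing Implicit Defensive.
Local Open Scope ring_scope.

Lemma sum_delta (p : nat -> rat) m r :
  \sum_(0 <= s < m) p s * (r == s)%:R = if (r < m)%N then p r else 0.
Proof.
elim: m => [|m IH]; first by rewrite big_nil.
rewrite big_nat_recr //= IH ltnS.
case: (ltngtP r m) => [rm|rm|->].
- by rewrite mulr0 addr0.
- by rewrite mulr0 addr0.
- by rewrite mulr1 add0r.
Qed.

Lemma combine (p Q Q' : nat -> rat) h k N :
  N = (h.+1 + k)%N ->
  (forall r, Q' r = \sum_(0 <= s < h.+2) p s * polya k s (h.+1 - s) r) ->
  (forall r, Q r = (Q' r.-1 * (r.-1)%:R + Q' r * (N%:R - r%:R)) / N%:R) ->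
  forall r, Q r = \sum_(0 <= s < h.+2) p s * polya k.+1 s (h.+1 - s) r.
Proof.
move=> HN HQ' HQ r; rewrite HQ !HQ' !mulr_suml -big_split mulr_suml.
rewrite !big_nat; apply: eq_bigr => s /andP[_ Hs].
rewrite polya_last.
have -> : (s + (h.+1 - s) + k)%N = N by rewrite subnKC // HN.
rewrite [X in X / _]/= ; ring.
Qed.

End SecH.
Section SecI.
Set Implicit Arguments. Unset Strict Implicit. Unset Printing Implicit Defensive.

Lemma prob_big (T : finType) (d : T -> nat) v r :
  (#|T| < r)%N -> prob_sixlen d v r = 0%R.
Proof.
move=> Hr; rewrite /prob_sixlen (_ : #|_| = 0%N) ?GRing.mul0r //.
apply/eqP; rewrite cards_eq0; apply/eqP/setP => f; rewrite !inE.
apply/negbTE; rewrite negb_and; apply/orP; right.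
by rewrite neq_ltn (leq_ltn_trans (sixlen_le f v) Hr).
Qed.

Lemma main_ind n (d : 'I_n -> nat) (w : 'I_n) (Vw : {set 'I_n}) (HwV : w \in Vw)
  h (Hh : #|Vw| = h) (Hdeg1 : forall v, v \notin Vw -> d v = 1%N) k :
  forall S : {set 'I_n}, Vw \subset S -> #|S| = (h + k)%N -> forall (wS : w \in S) r,
  prob_sixlen (fun v : {x : 'I_n | x \in S} => d (val v)) (exist _ w wS) r =
  (\sum_(0 <= s < h.+2) prob_sixlen (fun v : {x : 'I_n | x \in Vw} => d (val v))
      (exist _ w HwV) s * polya k s (h.+1 - s) r)%R.
Proof.
elim: k => [|k IH] S VS cS wS r.
  have E : Vw = S.
    by apply/eqP; rewrite eqEcard VS cS addn0 Hh leqnn.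
  subst S; rewrite (bool_irrelevance wS HwV).
  rewrite (_ : (\sum_(0 <= s < h.+2) _)%R = (\sum_(0 <= s < h.+2)
     (prob_sixlen (fun v : {x : 'I_n | x \in Vw} => d (val v)) (exist _ w HwV) s
      * (r == s)%:R))%R) // sum_delta.
  case: ifP => // /negbT; rewrite -leqNgt => Hr.
  apply: prob_big; rewrite card_sig (eq_card (B := Vw)) ?Hh //.
    by apply: leq_trans Hr.
have : (0 < #|S :\: Vw|)%N.
  by rewrite cardsD (setIidPr VS) cS Hh subn_gt0 addnS ltnS leq_addr.
case/card_gt0P => u; rewrite inE => /andP[uV uS].
set S0 := S :\ u.
have VS0 : Vw \subset S0 by rewrite subsetD1 VS uV.
have cS0 : #|S0| = (h + k)%N.
  by move: cS; rewrite (cardsD1 u S) uS addnS add1n => -[].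
have wS0 : w \in S0.
  rewrite in_setD1 wS andbT; apply/eqP => E; move: uV; rewrite -E HwV //.
have S0S : S0 \subset S := subD1set S u.
pose T := {x : 'I_n | x \in S}.
pose T' := {x : 'I_n | x \in S0}.
pose emb := fun y : T' => (exist (fun x => x \in S) (val y) (subsetP S0S _ (valP y)) : T).
pose inv := fun x : T => (insubd (exist (fun x => x \in S0) w wS0) (val x) : T').
pose u' := (exist (fun x => x \in S) u uS : T).
have embK : cancel emb inv.
  by move=> y; apply: val_inj; rewrite /inv val_insubd /= (valP y).
have invK x : x != u' -> emb (inv x) = x.
  move=> Nx; apply: val_inj; rewrite /= /inv val_insubd.
  suff -> : val x \in S0 by [].
  rewrite in_setD1 (valP x) andbT; apply: contra Nx => /eqP E.
  by apply/eqP; apply: val_inj.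
have embu y : emb y != u'.
  apply/negP => /eqP /(congr1 val) /= E; have := valP y.
  by rewrite [X in X \in _](_ : _ = u) // in_setD1 eqxx.
have step := step_prob (d := fun v : T => d (val v)) (d' := fun v : T' => d (val v))
    embK invK embu (fun j => erefl) (Hdeg1 u uV) (exist _ w wS0).
have Ew : emb (exist _ w wS0) = exist _ w wS by apply: val_inj.
rewrite Ew in step.
apply: (combine (N := #|S|) (Q' := fun r => prob_sixlen (fun v : T' => d (val v)) (exist _ w wS0) r)) r.
- by rewrite cS addnS.
- by move=> r'; apply: IH.
- move=> r'; rewrite step; congr (_ / _)%R.
    by rewrite card_sig (eq_card (B := S)) // => x; rewrite inE.
  by rewrite card_sig (eq_card (B := S)) // => x; rewrite inE.
Qed.

End SecI.

Theorem corollary4p7 (n : nat) (d : 'I_n -> nat) (w : 'I_n) (Vw : {set 'I_n})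
  (Hsum : \sum_(j < n) d j = n)
  (Hlt : hatn d < n)
  (HwV : w \in Vw)
  (HcardV : #|Vw| = hatn d)
  (Hdeg1 : forall v, v \notin Vw -> d v = 1) :
  forall r : nat,
    prob_sixlen d w r =
    (\sum_(0 <= s < (hatn d).+2)
        prob_sixlen (fun v : {x : 'I_n | x \in Vw} => d (val v))
                    (exist _ w HwV) s
        * polya (n - hatn d) s ((hatn d).+1 - s) r)%R.
Proof.
set h := hatn d.
have n0 : (0 < n)%N by apply: leq_ltn_trans Hlt.
have : (0 < #|~: Vw|)%N by rewrite cardsCs setCK card_ord HcardV subn_gt0.
case/card_gt0P => u; rewrite inE => uV.
set S0 := [set: 'I_n] :\ u.
have VS0 : Vw \subset S0 by rewrite subsetD1 subsetT uV.
have cS0 : #|S0| = (h + (n.-1 - h))%N.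
  have E : #|S0| = n.-1.
    have := cardsD1 u [set: 'I_n]; rewrite in_setT cardsT card_ord add1n.
    by move=> E; apply/eqP; rewrite -eqSS prednK // /S0 -E.
  by rewrite E subnKC // -ltnS prednK.
have wS0 : w \in S0.
  rewrite in_setD1 in_setT andbT; apply/eqP => E; move: uV; rewrite -E HwV //.
pose T' := {x : 'I_n | x \in S0}.
pose inv := fun x : 'I_n => (insubd (exist (fun x => x \in S0) w wS0) x : T').
have embK : cancel (val : T' -> 'I_n) inv.
  by move=> y; apply: val_inj; rewrite /inv val_insubd (valP y).
have invK x : x != u -> val (inv x) = x.
  move=> Nx; rewrite /inv val_insubd.
  by rewrite in_setD1 Nx in_setT.
have embu (y : T') : val y != u.
  by have := valP y; rewrite in_setD1 => /andP[].
have step := step_prob (d := d) (d' := fun v : T' => d (val v))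
    embK invK embu (fun j => erefl) (Hdeg1 u uV) (exist _ w wS0).
have nE : (n - h)%N = (n.-1 - h).+1.
  by rewrite -subSn ?prednK // -ltnS prednK.
rewrite nE.
apply: (combine (N := n) (Q := fun r => prob_sixlen d w r)
   (Q' := fun r => prob_sixlen (fun v : T' => d (val v)) (exist _ w wS0) r)).
- by rewrite addSn subnKC ?prednK // -ltnS prednK.
- by move=> r'; apply: (main_ind HwV HcardV Hdeg1).
- by move=> r'; rewrite /= step card_ord.
Qed.
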